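(* Let $L$ be a distributive lattice with generated Boolean algebra $B$, $n\ge1$, $a_i,b_i\in L$ with $a_i<b_i$ for $i\in[n]$, $\widehat{\mathbf e}_I\in L^n$ ($I\subseteq[n]$) the tuple with $i$-th component $b_i$ if $i\in I$ and $a_i$ otherwise, $D=\{\widehat{\mathbf e}_I:I\subseteq[n]\}$, and $f\colon D\to L$ monotone and satisfying $$f(\widehat{\mathbf e}_{I\cup\{k\}})\wedge a_k\le f(\widehat{\mathbf e}_I)\le f(\widehat{\mathbf e}_{I\setminus\{k\}})\vee b_k\quad\text{for all } I\subseteq[n],\ k\in[n].$$ Then $p^+(\widehat{\mathbf e}_J)\le f(\widehat{\mathbf e}_J)$ for all $J\subseteq[n]$.
   Context: $B$ is the Boolean algebra generated by $L$ (with $L$ embedded), with complement $x\mapsto x'$. $f$ monotone means $I\subseteq J\Rightarrow f(\widehat{\mathbf e}_I)\le f(\widehat{\mathbf e}_J)$. Define $c_I^+=f(\widehat{\mathbf e}_I)\vee\bigvee_{i\in I}b_i'\in B$ and $p^+(\mathbf x)=\bigvee_{I\subseteq[n]}(c_I^+\wedge\bigwedge_{i\in I}x_i)$, a polynomial function over $B$. *)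

(* Defs.v *)
From mathcomp Require Import all_boot all_order.
Set Implicit Arguments. Unset Strict Implicit. Unset Printing Implicit Defensive.
Import Order.TTheory.
Local Open Scope order_scope.

Definition bool_generated (d d' : Order.disp_t) (L : latticeType d)
  (B : ctbDistrLatticeType d') (emb : L -> B) : Prop :=
  forall S : B -> Prop,
    S \bot -> S \top ->
    (forall x y, S x -> S y -> S (x `&` y)) ->
    (forall x y, S x -> S y -> S (x `|` y)) ->
    (forall x, S x -> S (~` x)) ->
    (forall l, S (emb l)) ->
    forall y, S y.

Definition ehat (d : Order.disp_t) (L : latticeType d) (n : nat)
  (a b : 'I_n -> L) (I : {set 'I_n}) : 'I_n -> L :=
  fun i => if i \in I then b i else a i.

(* c_I^+ = f(\hat e_I) \/ \/_{i in I} b_i'  (computed in B). [f] is given as a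
   function of the index set I, i.e. F I = f(\hat e_I). *)
Definition cplus (d d' : Order.disp_t) (L : latticeType d)
  (B : ctbDistrLatticeType d') (emb : L -> B) (n : nat)
  (b : 'I_n -> L) (F : {set 'I_n} -> L) (I : {set 'I_n}) : B :=
  emb (F I) `|` \join_(i in I) ~` emb (b i).

Definition pplus (d d' : Order.disp_t) (L : latticeType d)
  (B : ctbDistrLatticeType d') (emb : L -> B) (n : nat)
  (b : 'I_n -> L) (F : {set 'I_n} -> L) (x : 'I_n -> B) : B :=
  \join_(I : {set 'I_n}) (cplus emb b F I `&` \meet_(i in I) x i).

(* Main.v *)
Require Import Defs.
From mathcomp Require Import all_boot all_order.
Import Order.TTheory Order.CTheory.
Local Open Scope order_scope.

Theorem lemma3p3 (d d' : Order.disp_t) (L : distrLatticeType d)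
  (B : ctbDistrLatticeType d') (emb : {lmorphism L -> B})
  (emb_inj : injective emb) (emb_gen : bool_generated emb)
  (n : nat) (n_ge1 : (1 <= n)%N) (a b : 'I_n -> L)
  (ab : forall i, a i < b i)
  (f : ('I_n -> L) -> L)
  (f_mono : forall I J : {set 'I_n}, I \subset J ->
     f (ehat a b I) <= f (ehat a b J))
  (f_cond : forall (I : {set 'I_n}) (k : 'I_n),
     f (ehat a b (k |: I)) `&` a k <= f (ehat a b I) /\
     f (ehat a b I) <= f (ehat a b (I :\ k)) `|` b k) :
  forall J : {set 'I_n},
    pplus emb b (fun I => f (ehat a b I)) (fun i => emb (ehat a b J i))
      <= emb (f (ehat a b J)).
Proof.
move=> J.
set F := fun I => f (ehat a b I).
have key : forall m (S K : {set 'I_n}), #|S| = m ->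
    emb (F (S :|: K)) `&` \meet_(k in S) emb (a k) <= emb (F K).
  elim=> [|m IH] S K.
    move/eqP; rewrite cards_eq0 => /eqP ->.
    by rewrite set0U big_set0 meetx1.
  move=> cS.
  have [k kS] : exists k, k \in S.
    apply/set0Pn; by rewrite -card_gt0 cS.
  rewrite (bigD1 k) //= meetA.
  have -> : S :|: K = k |: ((S :\ k) :|: K).
    by rewrite setUA setD1K.
  rewrite -omorphI.
  have H1 := (f_cond ((S :\ k) :|: K) k).1.
  apply: le_trans (leI2 _ (lexx _)) _.
  - exact: omorph_le H1.
  have := IH (S :\ k) K; rewrite (cardsD1 k S) kS in cS.
  case: cS => cS; move/(_ cS).
  suff -> : \meet_(i in S :\ k) emb (a i) = \meet_(i in S | i != k) emb (a i) by [].
  by apply: eq_bigl => i; rewrite in_setD1 andbC.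
rewrite /pplus; apply/joinsP => I _.
rewrite /cplus meetUl leUx; apply/andP; split.
  have h2 : \meet_(i in I) emb (ehat a b J i) <= \meet_(i in I :\: J) emb (a i).
    apply/meetsP => i /setDP [iI iJ].
    by apply: le_trans (meets_inf _ iI) _; rewrite /ehat (negbTE iJ).
  have h1 : emb (F I) <= emb (F ((I :\: J) :|: J)).
    apply: omorph_le; apply: f_mono; apply/subsetP => i iI.
    by rewrite !inE iI; case: (i \in J).
  exact: le_trans (leI2 h1 h2) (key _ _ _ erefl).
set M := \meet_(i in I) _.
have hC : \join_(i in I) ~` emb (b i) <= ~` M.
  apply/joinsP => i iI; rewrite leC.
  apply: le_trans (meets_inf _ iI) _; apply: omorph_le; rewrite /ehat.
  by case: (i \in J) => //; apply: ltW.
apply: le_trans (leI2 hC (lexx M)) _.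
by rewrite meetCx le0x.
Qed.
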